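(* Let $i$ be an integer. If $H\in A_\mathfrak{p}$ satisfies $(1+\overline{\chi}^{\,i})H=0$ in $A_\mathfrak{p}$, then $i\|H\|$ is divisible by $p_\mathfrak{p}-1$.
   Context: $K$ is a number field with ring of integers $\mathcal{O}$, $\mathfrak{p}$ a maximal ideal of $\mathcal{O}$, $p_\mathfrak{p}$ the rational prime below $\mathfrak{p}$. $A_\mathfrak{p}$ is the Grothendieck ring of finite-dimensional continuous representations of $\mathrm{Gal}(\overline{\mathbb{Q}}/\mathbb{Q})$ with coefficients in $\mathcal{O}/\mathfrak{p}$ unramified outside $p_\mathfrak{p}$; $\mathcal{S}$ is the set of isomorphism classes of simple such representations, so every $H\in A_\mathfrak{p}$ is uniquely $H=\sum_{S\in\mathcal S}n_SS$, $n_S\in\mathbb{Z}$, and $\|H\|=\sum_S|n_S|\dim S$. $\overline{\chi}$ is the reduction mod $\mathfrak{p}$ of the $p_\mathfrak{p}$-adic cyclotomic character, viewed as a unit of $A_\mathfrak{p}$. *)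

(* Defs.v *)
From HB Require Import structures.
From mathcomp Require Import all_boot all_order all_algebra all_field.
From mathcomp Require Import boolp.
Set Implicit Arguments. Unset Strict Implicit. Unset Printing Implicit Defensive.
Import Order.TTheory GRing.Theory Num.Theory.
Local Open Scope ring_scope.

(* Gal(Qbar/Q) is modelled as the field automorphisms of algC
   (algC is an algebraic closure of Q; field automorphisms fix Q). *)
Definition is_gal (s : algC -> algC) : Prop :=
  [/\ forall x y, s (x + y) = s x + s y,
      forall x y, s (x * y) = s x * s y,
      s 1 = 1 & bijective s].

(* A finite-dimensional representation with coefficients in F:
   sigma acts on column vectors F^n through the matrix ract sigma. *)
Record rep (F : fieldType) := Rep { rdim : nat; ract : (algC -> algC) -> 'M[F]_rdim }.

Definition rep_hom (F : fieldType) (R : rep F) : Prop :=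
  ract R id = 1%:M /\
  forall s t, is_gal s -> is_gal t -> ract R (s \o t) = ract R s *m ract R t.

(* continuity for the Krull topology (discrete topology on the finite target):
   the kernel contains Gal(Qbar/Q(xs)) for a finite set xs of algebraic numbers *)
Definition rep_continuous (F : fieldType) (R : rep F) : Prop :=
  exists xs : seq algC, forall s, is_gal s -> (forall x, x \in xs -> s x = x) ->
    ract R s = 1%:M.

Definition Aint_ideal (P : algC -> Prop) : Prop :=
  [/\ forall x, P x -> x \in Aint, P 0,
      forall x y, P x -> P y -> P (x + y) &
      forall a x, a \in Aint -> P x -> P (a * x)].

Definition Aint_maximal (P : algC -> Prop) : Prop :=
  [/\ Aint_ideal P, ~ P 1 &
      forall J, Aint_ideal J -> (forall x, P x -> J x) -> J 1 \/ (forall x, J x -> P x)].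

Definition inertia (P : algC -> Prop) (s : algC -> algC) : Prop :=
  is_gal s /\ forall x, x \in Aint -> P (s x - x).

Definition rep_unram_outside (F : fieldType) (p : nat) (R : rep F) : Prop :=
  forall (l : nat) (P : algC -> Prop), prime l -> l != p ->
    Aint_maximal P -> P (l%:R) -> forall s, inertia P s -> ract R s = 1%:M.

(* objects of the category defining A_p *)
Definition admissible (F : fieldType) (p : nat) (R : rep F) : Prop :=
  [/\ rep_hom R, rep_continuous R & rep_unram_outside p R].

(* simple (irreducible, nonzero) representation; a row vector u is in the
   row-space of U, and sigma sends the column vector u^T to (ract s) u^T *)
Definition rep_simple (F : fieldType) (R : rep F) : Prop :=
  (0 < rdim R)%N /\
  forall U : 'M[F]_(rdim R),
    (forall s, is_gal s -> (U *m (ract R s)^T <= U)%MS) ->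
    (\rank U == 0)%N || row_full U.

Definition rep_iso (F : fieldType) (R S : rep F) : Prop :=
  exists Q : 'M[F]_(rdim R, rdim S),
    [/\ row_free Q, row_full Q &
        forall s, is_gal s -> ract R s *m Q = Q *m ract S s].

(* a fixed primitive p-th root of unity in algC (p.-1.+1 = p for p prime) *)
Definition zeta (p : nat) : algC := sval (C_prim_root_exists (ltn0Sn p.-1)).

(* reduction mod p of the p-adic cyclotomic character: sigma(zeta) = zeta^k,
   chibar sigma = k mod p, viewed in F (of characteristic p) *)
Definition chibar (F : fieldType) (p : nat) (s : algC -> algC) : F :=
  (\sum_(k < p | s (zeta p) == zeta p ^+ k) (k : nat))%:R.

Definition twist (F : fieldType) (p : nat) (i : int) (R : rep F) : rep F :=
  @Rep F (rdim R) (fun s => (chibar F p s ^ i) *: ract R s).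

(* elements of A_p are formal Z-combinations of (classes of) simple objects;
   coefficient of the class of S in sum_k c_k [R_k] *)
Definition coef (F : fieldType) (H : seq (int * rep F)) (S : rep F) : int :=
  \sum_(x <- H) (if `[< rep_iso x.2 S >] then x.1 else 0).

Definition twistA (F : fieldType) (p : nat) (i : int) (H : seq (int * rep F)) :=
  [seq (x.1, twist p i x.2) | x <- H].

(* ||H|| = sum |n_S| dim S, for H written with pairwise non-isomorphic simples *)
Definition normA (F : fieldType) (H : seq (int * rep F)) : nat :=
  \sum_(x <- H) (`|x.1|%N * rdim x.2)%N.

Definition rep0 (F : fieldType) : int * rep F := (0, @Rep F 0 (fun _ => 0)).

Definition canonical_expr (F : fieldType) (p : nat) (H : seq (int * rep F)) : Prop :=
  (forall j, (j < size H)%N ->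
     admissible p (nth (rep0 F) H j).2 /\ rep_simple (nth (rep0 F) H j).2) /\
  (forall (j k : nat), (j < size H)%N -> (k < size H)%N -> j <> k ->
     ~ rep_iso (nth (rep0 F) H j).2 (nth (rep0 F) H k).2).

Definition annihilated (F : fieldType) (p : nat) (i : int) (H : seq (int * rep F)) : Prop :=
  forall S : rep F, admissible p S -> rep_simple S ->
    coef H S + coef (twistA p i H) S = 0.

(* Main.v *)
Require Import Defs.
From HB Require Import structures.
From mathcomp Require Import all_boot all_order all_algebra all_field.
From mathcomp Require Import boolp.
Import Order.TTheory GRing.Theory Num.Theory.
Local Open Scope ring_scope.

Section Iso.
Variable F : fieldType.

Lemma iso_refl (R : rep F) : rep_iso R R.
Proof.
exists 1%:M; split; first by apply/row_freeP; exists 1%:M; rewrite mul1mx.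
  by apply/row_fullP; exists 1%:M; rewrite mul1mx.
by move=> s _; rewrite mulmx1 mul1mx.
Qed.

Lemma inv_pair m n (Q : 'M[F]_(m, n)) : row_free Q -> row_full Q ->
  exists B : 'M[F]_(n, m), Q *m B = 1%:M /\ B *m Q = 1%:M.
Proof.
move=> /row_freeP [B HB] /row_fullP [C HC].
have eBC : B = C by rewrite -[B]mul1mx -HC -mulmxA HB mulmx1.
by exists B; split=> //; rewrite eBC.
Qed.

Lemma iso_sym (R S : rep F) : rep_iso R S -> rep_iso S R.
Proof.
case=> Q [fr fu HQ]; have [B [QB BQ]] := inv_pair _ _ _ fr fu.
exists B; split.
- by apply/row_freeP; exists Q.
- by apply/row_fullP; exists Q.
move=> s gs; have := congr1 (fun M => B *m M *m B) (HQ s gs).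
by rewrite !mulmxA BQ mul1mx -!mulmxA QB mulmx1 => <-.
Qed.

Lemma iso_trans (R S T : rep F) : rep_iso R S -> rep_iso S T -> rep_iso R T.
Proof.
case=> Q [fr fu HQ]; case=> Q' [fr' fu' HQ'].
have [B [QB BQ]] := inv_pair _ _ _ fr fu; have [B' [QB' BQ']] := inv_pair _ _ _ fr' fu'.
exists (Q *m Q'); split.
- by apply/row_freeP; exists (B' *m B); rewrite -mulmxA (mulmxA Q') QB' mul1mx QB.
- by apply/row_fullP; exists (B' *m B); rewrite -mulmxA (mulmxA B) BQ mul1mx BQ'.
by move=> s gs; have := congr1 (mulmx Q) (HQ' s gs); rewrite !mulmxA HQ.
Qed.

Lemma det_conj m n (A : 'M[F]_m) (B : 'M[F]_n) (Q : 'M[F]_(m, n)) (Q' : 'M[F]_(n, m)) :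
  Q *m Q' = 1%:M -> Q' *m Q = 1%:M -> A *m Q = Q *m B -> m = n /\ \det A = \det B.
Proof.
move=> QQ' Q'Q AQ.
have emn : m = n.
  apply/eqP; rewrite eqn_leq.
  have := mxrankM_maxl Q Q'; rewrite QQ' mxrank1 => h1.
  have := mxrankM_maxl Q' Q; rewrite Q'Q mxrank1 => h2.
  by rewrite (leq_trans h1 (rank_leq_col _)) (leq_trans h2 (rank_leq_col _)).
split=> //; move: Q Q' B QQ' Q'Q AQ; rewrite -emn => Q Q' B QQ' Q'Q AQ.
have := congr1 determinant QQ'; rewrite det_mulmx det1 => dQ.
have := congr1 determinant AQ; rewrite !det_mulmx => e.
have uQ : \det Q != 0 by apply/eqP=> h; move: dQ; rewrite h mul0r => /eqP; rewrite eq_sym oner_eq0.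
by apply: (mulIf uQ); rewrite e mulrC.
Qed.

Lemma iso_det (R S : rep F) s : rep_iso R S -> is_gal s ->
  rdim R = rdim S /\ \det (ract R s) = \det (ract S s).
Proof.
case=> Q [fr fu HQ] gs; have [B [QB BQ]] := inv_pair _ _ _ fr fu.
exact: det_conj QB BQ (HQ s gs).
Qed.

End Iso.

Lemma zetaP q : q.+1.-primitive_root (zeta q.+1).
Proof. by rewrite /zeta; case: (C_prim_root_exists _). Qed.

Lemma gal_exp s : is_gal s -> forall x n, s (x ^+ n) = s x ^+ n.
Proof.
case=> _ hM h1 _ x; elim=> [|n IH]; first by rewrite !expr0 h1.
by rewrite !exprS hM IH.
Qed.

Lemma chibar_eq (F : fieldType) q s (k : nat) : (k < q.+1)%N ->
  s (zeta q.+1) = zeta q.+1 ^+ k -> chibar F q.+1 s = k%:R.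
Proof.
move=> kq hs; rewrite /chibar hs.
rewrite (eq_bigl (fun k' : 'I_q.+1 => k' == Ordinal kq)); last first.
  by move=> k'; rewrite (eq_prim_root_expr (zetaP q)) !modn_small // eq_sym.
by rewrite big_pred1_eq.
Qed.

Lemma chibar_val (F : fieldType) q s : (0 < q)%N -> is_gal s ->
  exists k : nat, (0 < k < q.+1)%N /\ chibar F q.+1 s = k%:R.
Proof.
move=> q0 gs; have pz := zetaP q.
have h : s (zeta q.+1) ^+ q.+1 = 1.
  by rewrite -(gal_exp _ gs) (prim_expr_order pz); case: gs.
have [k hk] := prim_rootP pz h.
exists k; split; last exact: chibar_eq.
rewrite ltn_ord andbT lt0n; apply/eqP=> k0; move: hk; rewrite k0 expr0.
case: gs => _ _ h1 [t st ts] e.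
have : zeta q.+1 = 1 by rewrite -(st (zeta q.+1)) e -h1 st.
move/eqP; rewrite -(expr1 (zeta q.+1)) -[X in _ == X](expr0 (zeta q.+1)).
by rewrite (eq_prim_root_expr pz) modn_small // modn_small.
Qed.

Lemma chibar_surj (F : fieldType) q (k : nat) : (k < q.+1)%N -> coprime k q.+1 ->
  exists s, is_gal s /\ chibar F q.+1 s = k%:R.
Proof.
move=> kq co; have [u hu] := Qn_aut_exists co.
exists u; split; last first.
  by apply: chibar_eq => //; apply: hu; exact: prim_expr_order (zetaP q).
split; [exact: rmorphD | exact: rmorphM | exact: rmorph1 |].
by exists (algC_invaut u); [exact: algC_autK | exact: algC_invautK].
Qed.

Lemma final_div (F : fieldType) p (hchar : p \in [pchar F]) (e : nat) :
  (forall k, (0 < k < p)%N -> (k%:R : F) ^+ e = 1) -> (p.-1 %| e)%N.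
Proof.
move=> he; have hp := pcharf_prime hchar; have p1 := prime_gt1 hp.
have nz k : (0 < k < p)%N -> (k%:R : F) != 0.
  case/andP=> k0 kp; rewrite -(dvdn_pcharf hchar); apply/negP=> /dvdn_leq.
  by move=> /(_ k0); rewrite leqNgt kp.
have ferm k : (0 < k < p)%N -> (k%:R : F) ^+ p.-1 = 1.
  move=> hk; apply: (mulIf (nz k hk)); rewrite mul1r -exprSr prednK ?(ltnW p1) //.
  by have := pFrobenius_aut_nat hchar k; rewrite pFrobenius_autE.
set r := (e %% p.-1)%N.
have hr k : (0 < k < p)%N -> (k%:R : F) ^+ r = 1.
  move=> hk; have := he k hk; rewrite {1}(divn_eq e p.-1) exprD mulnC exprM ferm //.
  by rewrite expr1n mul1r.
rewrite /dvdn -/r; apply/eqP; apply/eqP/negPn/negP; rewrite -lt0n => r0.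
have : (size [seq (k%:R : F) | k <- iota 1 p.-1] <= r)%N.
  apply: max_unity_roots => //.
    apply/allP=> x /mapP [k]; rewrite mem_iota => hk ->; rewrite unity_rootE hr //.
    by move: hk; rewrite add1n prednK ?(ltnW p1).
  rewrite map_inj_in_uniq ?iota_uniq // => a b; rewrite !mem_iota add1n prednK ?(ltnW p1) //.
  move=> ha hb eab; wlog ab : a b ha hb eab / (a <= b)%N.
    by move=> W; case/orP: (leq_total a b) => h; [|apply/esym]; apply: W.
  apply/eqP; rewrite eqn_leq ab /= leqNgt; apply/negP=> hlt.
  have : ((b - a)%:R : F) != 0.
    by apply: nz; rewrite subn_gt0 hlt /= (leq_ltn_trans (leq_subr _ _)) //; case/andP: hb.
  by rewrite natrB // eab subrr eqxx.
rewrite size_map size_iota leqNgt ltn_pmod //.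
by rewrite -ltnS prednK ?(ltnW p1).
Qed.
Lemma scale_mulmx (F : fieldType) m n k (c : F) (Q : 'M[F]_(m,n)) (B : 'M[F]_(n,k)) :
  c *: (Q *m B) = Q *m (c *: B).
Proof.
apply/matrixP=> a b; rewrite !mxE mulr_sumr; apply: eq_bigr => j _; rewrite !mxE mulrCA //.
Qed.

Section Tw.
Variables (F : fieldType) (p : nat) (i : int).

Lemma twist_iso (R S : rep F) : rep_iso R S -> rep_iso (twist p i R) (twist p i S).
Proof.
case=> Q [fr fu HQ]; exists Q; split=> // s gs.
rewrite /twist /=; apply/matrixP => a b; rewrite !mxE; under eq_bigr do rewrite mxE; under [RHS]eq_bigr do rewrite mxE; have := HQ s gs; move/matrixP/(_ a b); rewrite !mxE => e; rewrite (eq_bigr (fun k => chibar F p s ^ i * (ract R s a k * Q k b))); last by move=> k _; rewrite mulrA. rewrite -mulr_sumr e mulr_sumr; by apply: eq_bigr => k _; rewrite mulrCA.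
Qed.

Lemma untwist (R : rep F) : (forall s, is_gal s -> chibar F p s != 0) ->
  rep_iso (twist p (- i) (twist p i R)) R.
Proof.
move=> hc; exists 1%:M; split.
- by apply/row_freeP; exists 1%:M; rewrite mul1mx.
- by apply/row_fullP; exists 1%:M; rewrite mul1mx.
move=> s gs /=; rewrite scalerA -invr_expz mulVf ?scale1r ?mulmx1 ?mul1mx //.
exact: expfz_neq0 (hc s gs).
Qed.

Lemma det_twist (R : rep F) s :
  \det (ract (twist p i R) s) = (chibar F p s ^ i) ^+ rdim R * \det (ract R s).
Proof. by rewrite /= detZ. Qed.

Lemma gal_inv s : is_gal s -> exists t, is_gal t /\ s \o t = id.
Proof.
case=> hD hM h1 [t st ts]; exists t; split; last by apply: funext => x /=; rewrite ts.
split.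
- by move=> x y; rewrite -{1}(ts x) -{1}(ts y) -hD st.
- by move=> x y; rewrite -{1}(ts x) -{1}(ts y) -hM st.
- by rewrite -h1 st.
by exists s.
Qed.

Lemma det_neq0 (R : rep F) s : rep_hom R -> is_gal s -> \det (ract R s) != 0.
Proof.
case=> h1 hM gs; have [t [gt st]] := gal_inv _ gs.
have := congr1 determinant (hM s t gs gt); rewrite st h1 det1 det_mulmx.
move=> e; apply/eqP=> h; move: e; by rewrite h mul0r => /eqP; rewrite oner_eq0.
Qed.
End Tw.

Theorem mainTheorem3 (F : finFieldType) (p : nat) (hp : prime p)
  (hchar : p \in [pchar F]) (i : int) (H : seq (int * rep F))
  (hH : canonical_expr p H) (hann : annihilated p i H) :
  ((p%:Z - 1) %| i * (normA H)%:Z)%Z.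
Proof.
case: p hp hchar hH hann => [//|q] hp hchar hH hann.
have q0 : (0 < q)%N by case: q hp {hchar hH hann}.
have chnz : forall s, is_gal s -> chibar F q.+1 s != 0.
  move=> s gs; have [k [hk ->]] := chibar_val F q s q0 gs.
  rewrite -(dvdn_pcharf hchar); apply/negP => /dvdn_leq; case/andP: hk => k0 kp.
  by move/(_ k0); rewrite leqNgt kp.
set x0 := rep0 F.
set N := size H.
pose n (j : 'I_N) := (nth x0 H j).1.
pose S (j : 'I_N) := (nth x0 H j).2.
have adm j : admissible q.+1 (S j) /\ rep_simple (S j) := hH.1 j (ltn_ord j).
have dist j k : j != k -> ~ rep_iso (S j) (S k).
  move=> jk; apply: hH.2 => // e; move/eqP: jk; apply; exact: val_inj.
have c1 j : coef H (S j) = n j.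
  rewrite /coef (big_nth x0) big_mkord (bigD1 j) //= (asboolT (iso_refl _ _)).
  rewrite big1 ?addr0 // => k kj.
  by rewrite asboolF //; apply: dist.
have c2 j : coef (twistA q.+1 i H) (S j) =
    \sum_(k < N) (if `[< rep_iso (twist q.+1 i (S k)) (S j) >] then n k else 0).
  by rewrite /coef /twistA big_map (big_nth x0) big_mkord.
have U j k k' : rep_iso (twist q.+1 i (S k)) (S j) ->
    rep_iso (twist q.+1 i (S k')) (S j) -> k = k'.
  move=> h h'; apply/eqP; apply/negPn/negP => kk'; apply: (dist _ _ kk').
  have h2 := iso_trans _ _ _ _ h (iso_sym _ _ _ h').
  have h3 := twist_iso F q.+1 (- i) _ _ h2.
  apply: iso_trans (iso_sym _ _ _ (untwist F q.+1 i (S k) chnz)) _.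
  exact: iso_trans h3 (untwist F q.+1 i (S k') chnz).
pose sig (j : 'I_N) : 'I_N := if n j != 0 then
  odflt j [pick k | `[< rep_iso (twist q.+1 i (S k)) (S j) >] ] else j.
have K j : n j != 0 -> rep_iso (twist q.+1 i (S (sig j))) (S j) /\ n (sig j) = - n j.
  move=> nj; have := hann (S j) (adm j).1 (adm j).2; rewrite c1 c2.
  rewrite /sig nj; case: pickP => [k hk | none] /=.
  - rewrite (bigD1 k) //= hk big1 ?addr0.
      move=> e; split; first exact/asboolP.
      by apply/eqP; rewrite -addr_eq0 addrC e.
    move=> k' k'k; case: asboolP => // h'; exfalso; move/eqP: k'k; apply.
    exact: U h' (asboolW hk).
  - rewrite big1 ?addr0 => [e|k _]; last by rewrite none.
    by move: nj; rewrite e eqxx.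
have sj j : n j = 0 -> sig j = j by move=> h; rewrite /sig h eqxx.
have sig_inj : injective sig.
  move=> j1 j2 e.
  case: (eqVneq (n j1) 0) => h1; case: (eqVneq (n j2) 0) => h2.
  - by rewrite -(sj _ h1) e sj.
  - have [_ e2] := K j2 h2; move: h2; rewrite -oppr_eq0 -e2 -e sj // h1 eqxx //.
  - have [_ e1] := K j1 h1; move: h1; rewrite -oppr_eq0 -e1 e sj // h2 eqxx //.
  - have [i1 _] := K j1 h1; have [i2 _] := K j2 h2; rewrite e in i1.
    apply/eqP; apply/negPn/negP=> ne; apply: (dist _ _ ne).
    exact: iso_trans (iso_sym _ _ _ i1) i2.
have chiW s : is_gal s -> (chibar F q.+1 s ^ i) ^+ normA H = 1.
  move=> gs; set c := chibar F q.+1 s ^ i.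
  pose D (j : 'I_N) := \det (ract (S j) s) ^+ `|n j|.
  pose w (j : 'I_N) := (`|n j| * rdim (S j))%N.
  have R1 j : D j = c ^+ w (sig j) * D (sig j).
    case: (eqVneq (n j) 0) => h.
      by rewrite /D /w (sj _ h) h /= ?mul0n !expr0 mul1r.
    have [iso e] := K j h; have [edim edet] := iso_det _ _ _ s iso gs.
    by rewrite /D /w -edet det_twist exprMn -exprM mulnC e abszN.
  have P0 : \prod_j D j != 0.
    apply/prodf_neq0 => j _; rewrite expf_neq0 //.
    by case: (adm j) => [[hh _ _] _]; exact: det_neq0.
  have eW : normA H = \sum_j w j by rewrite /normA (big_nth x0) big_mkord.
  have e1 : \sum_j w (sig j) = \sum_j w j by apply: esym; exact: (reindex_inj sig_inj).
  have e2 : \prod_j D (sig j) = \prod_j D j by apply: esym; exact: (reindex_inj sig_inj).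
  have : \prod_j D j = c ^+ normA H * \prod_j D j.
    by rewrite {1}(eq_bigr _ (fun j _ => R1 j)) big_split /= prodrXr e1 e2 eW.
  by move=> e; apply: (mulIf P0); rewrite mul1r -e.
have hk : forall k, (0 < k < q.+1)%N -> (k%:R : F) ^+ (`|i| * normA H) = 1.
  move=> k /andP [k0 kp].
  have co : coprime k q.+1.
    rewrite coprime_sym prime_coprime //; apply/negP => /(dvdn_leq k0).
    by rewrite leqNgt kp.
  have [s [gs cs]] := chibar_surj F q k kp co.
  have := chiW s gs; rewrite cs; case Ei: i => [a|a] /=.
    by rewrite -exprM.
  by rewrite exprVn -exprM => /eqP; rewrite invr_eq1 => /eqP.
have := final_div F q.+1 hchar _ hk.
have -> : (q.+1%:Z - 1 = q%:Z)%R by rewrite -addn1 PoszD addrK.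
by rewrite dvdzE abszM absz_nat.
Qed.
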